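(* Let $f,g$ be packed words of length $n$. Then $g\leq f$ if, and only if, $g$ is a (strict) T-partition of the topology $\mathcal{T}_f$.
   Context: $[n]=\{1,\ldots,n\}$. A packed word of length $n$ is a word $f=f(1)\ldots f(n)$ of positive integers with $\{f(1),\ldots,f(n)\}=\{1,\ldots,\max f\}$. For packed words $f,g$ of the same length $n$, $g\leq f$ means: for all $i,j\in[n]$, $f(i)\leq f(j)\Rightarrow g(i)\leq g(j)$; $f(i)>f(j)$ and $i<j$ $\Rightarrow g(i)>g(j)$; $f(i)=f(j)\Rightarrow g(i)=g(j)$. For a packed word $f$ of length $n$, $\mathcal{T}_f$ is the topology on $[n]$ whose associated preorder is $i\leq j$ iff $f(i)\leq f(j)$ (its open sets are $\emptyset$ and the sets $f^{-1}(\{i,\ldots,\max f\})$). For a topology $\mathcal{T}$ on $[n]$: $i\leq_{\mathcal{T}}j$ iff every open set containing $i$ contains $j$; $i\sim_{\mathcal{T}}j$ iff $i\leq_{\mathcal{T}}j$ and $j\leq_{\mathcal{T}}i$; $i<_{\mathcal{T}}j$ iff $i\leq_{\mathcal{T}}j$ and not $j\leq_{\mathcal{T}}i$. A (strict) T-partition of $\mathcal{T}$ is a packed word $g$ of length $n$ (viewed as a surjection $[n]\to[\max g]$) such that: $i\leq_{\mathcal{T}}j\Rightarrow g(i)\leq g(j)$; $i<_{\mathcal{T}}j$ and $i>j$ $\Rightarrow g(i)<g(j)$; and if $i<j<k$, $i\sim_{\mathcal{T}}k$ and $g(i)=g(j)=g(k)$, then $i\sim_{\mathcal{T}}j$ and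 $j\sim_{\mathcal{T}}k$. *)

(* Defs.v *)
(* Positions [n] = {1..n} are modelled by 'I_n (0-based, same order). *)
From mathcomp Require Import all_boot.
Set Implicit Arguments. Unset Strict Implicit. Unset Printing Implicit Defensive.

(* max f (0 for the empty word) *)
Definition wmax n (f : 'I_n -> nat) : nat := \max_(i < n) f i.

Definition packed n (f : 'I_n -> nat) : Prop :=
  (forall i, 0 < f i) /\ (forall k, 1 <= k <= wmax f -> exists i, f i = k).

Definition wle n (g f : 'I_n -> nat) : Prop :=
  forall i j : 'I_n,
    (f i <= f j -> g i <= g j) /\
    (f j < f i -> (i < j)%N -> g j < g i) /\
    (f i = f j -> g i = g j).

Definition topf n (f : 'I_n -> nat) : {set {set 'I_n}} :=
  set0 |: [set [set x | (k : nat) <= f x] | k : 'I_(wmax f).+1 & 0 < k].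

Definition leT n (T : {set {set 'I_n}}) (i j : 'I_n) : Prop :=
  forall U, U \in T -> i \in U -> j \in U.
Definition simT n (T : {set {set 'I_n}}) i j : Prop := leT T i j /\ leT T j i.
Definition ltT n (T : {set {set 'I_n}}) i j : Prop := leT T i j /\ ~ leT T j i.

Definition Tpartition n (T : {set {set 'I_n}}) (g : 'I_n -> nat) : Prop :=
  packed g /\
  (forall i j, leT T i j -> g i <= g j) /\
  (forall i j, ltT T i j -> (j < i)%N -> g i < g j) /\
  (forall i j k : 'I_n, (i < j)%N -> (j < k)%N -> simT T i k ->
       g i = g j -> g j = g k -> simT T i j /\ simT T j k).

(* Main.v *)
Require Import Defs.
From mathcomp Require Import all_boot.

Lemma leT_topf n (f : 'I_n -> nat) (i j : 'I_n) :
  packed f -> (leT (topf f) i j <-> f i <= f j).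
Proof.
move=> [fpos _]; split.
- move=> H.
  have Hi : f i < (wmax f).+1 by rewrite ltnS /wmax (leq_bigmax i).
  have := H [set x | f i <= f x].
  rewrite !inE leqnn /=; apply => //.
  apply/orP; right; apply/imsetP.
  exists (Ordinal Hi); first by rewrite inE /= fpos.
  by [].
- move=> Hij U /setU1P [-> | /imsetP [k _ ->]]; first by rewrite inE.
  rewrite !inE => Hk; exact: leq_trans Hk Hij.
Qed.

Theorem lemma18 (n : nat) (f g : 'I_n -> nat) :
  packed f -> packed g -> (wle g f <-> Tpartition (topf f) g).
Proof.
move=> pf pg.
have le := fun i j => @leT_topf n f i j pf.
split.
- move=> W; split => //; split; [|split].
  + by move=> i j /le H; case: (W i j) => A _; exact: A.
  + move=> i j [/le H1 /le H2] ji.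
    have H : f i < f j by rewrite ltnNge; apply/negP.
    by case: (W j i) => _ [B _]; exact: B.
  + move=> i j k ij jk [/le ik /le ki] gij gjk.
    have fik : f i = f k by apply/eqP; rewrite eqn_leq ik ki.
    have fij : f i = f j.
      case: (ltngtP (f i) (f j)) => // c.
      * case: (W j k) => _ [B _].
        have := B (leq_trans _ c) jk. rewrite fik => /(_ (leqnn _)).
        by rewrite gjk ltnn.
      * case: (W i j) => _ [B _].
        by have := B c ij; rewrite gij ltnn.
    by split; split; apply/le; rewrite -?fik -?fij.
- move=> [_ [A [B _]]] i j; split; [|split].
  + by move=> /le; apply: A.
  + move=> c ij; apply: B => //; split; first by apply/le; exact: ltnW.
    by move/le; rewrite leqNgt c.
  + move=> e; apply/eqP; rewrite eqn_leq; apply/andP; split; apply: A; apply/le; by rewrite e.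
Qed.
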